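(* Let $n_1,\dots,n_m$ be positive integers, $n=\prod_j n_j$, $\Omega=\times_{j=1}^m\{x\in\mathbb{C}^{n_j}:x^\dagger x=1\}$, and let $\mathcal{L}_R=\{g_G(x_1,\dots,x_m)=(\otimes_j x_j)^\dagger G(\otimes_j x_j): G\ \text{an } n\times n\text{ Hermitian matrix}\}$, a real vector space of real functions on $\Omega$. Let $\Sigma^{\geq}=\{g_G: G\succeq0\}$ and $\Sigma^{<}=\{g_G: G\prec 0\}$. Let $\mathscr{C}\subseteq\mathcal{L}_R$ be a P-coherent set of desirable gambles, i.e. a closed convex cone with $\Sigma^{\geq}\subseteq\mathscr{C}$ and $\mathscr{C}\cap\Sigma^{<}=\emptyset$. For a linear functional $L$ on $\mathcal{L}_R$ define the Hermitian matrix $Z=L\big((\otimes_j x_j)(\otimes_j x_j)^\dagger\big)$ (entrywise, $L$ extended complex-linearly), so that $L(g_G)=\operatorname{Tr}(GZ)$. Then the dual cone $\mathscr{C}^\circ=\{L: L(g)\ge0\ \forall g\in\mathscr{C}\}$ equals the set of those $L$ whose matrix $Z$ satisfies $Z\succeq0$ and $\operatorname{Tr}(GZ)\ge0$ for all $g_G\in\mathscr{C}$.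
   Context: $G\succeq0$ means positive semidefinite, $G\prec0$ negative definite. *)

(* Defs.v *)
From HB Require Import structures.
From mathcomp Require Import all_boot all_order all_algebra.
From mathcomp Require Import reals.
From mathcomp Require Import complex.
Set Implicit Arguments. Unset Strict Implicit. Unset Printing Implicit Defensive.
Import Order.TTheory GRing.Theory Num.Theory.
Local Open Scope ring_scope.

Definition adj (R : realType) (p q : nat) (A : 'M[R[i]]_(p, q)) : 'M[R[i]]_(q, p) :=
  (map_mx (fun z : R[i] => z^*) A)^T.

Definition herm_mx (R : realType) (p : nat) (A : 'M[R[i]]_p) : Prop := adj A = A.

Definition psd (R : realType) (p : nat) (A : 'M[R[i]]_p) : Prop :=
  herm_mx A /\ forall v : 'cV[R[i]]_p, 0 <= (adj v *m A *m v) 0 0.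

Definition negdef (R : realType) (p : nat) (A : 'M[R[i]]_p) : Prop :=
  herm_mx A /\ forall v : 'cV[R[i]]_p, v != 0 -> (adj v *m A *m v) 0 0 < 0.

(* multi-indices (i_1,...,i_m), i_j < n_j; the tensor space C^n, n = prod n_j,
   has its basis indexed by them (via enum_val) *)
Definition Idx (m : nat) (ns : 'I_m -> nat) := {dffun forall j : 'I_m, 'I_(ns j)}.
Definition tdim (m : nat) (ns : 'I_m -> nat) : nat := #|{: Idx ns}|.

Definition vecs (R : realType) (m : nat) (ns : 'I_m -> nat) :=
  forall j : 'I_m, 'cV[R[i]]_(ns j).

Definition Omega (R : realType) (m : nat) (ns : 'I_m -> nat) :=
  {x : vecs R ns | forall j, (adj (x j) *m x j) 0 0 = 1}.

Definition tensvec (R : realType) (m : nat) (ns : 'I_m -> nat) (x : vecs R ns)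
  : 'cV[R[i]]_(tdim ns) :=
  \col_(a < tdim ns) \prod_(j < m) x j (@enum_val _ (@predT (Idx ns)) a j) 0.

Definition psi (R : realType) (m : nat) (ns : 'I_m -> nat) (x : Omega R ns) :=
  tensvec (sval x).

(* g_G(x) = (x)x^dagger G (x)x   (real for herm_mx G) *)
Definition gG (R : realType) (m : nat) (ns : 'I_m -> nat) (G : 'M[R[i]]_(tdim ns))
  : Omega R ns -> R :=
  fun x => complex.Re ((adj (psi x) *m G *m psi x) 0 0).

Definition LR (R : realType) (m : nat) (ns : 'I_m -> nat) (f : Omega R ns -> R) : Prop :=
  exists G : 'M[R[i]]_(tdim ns), herm_mx G /\ f = gG G.

Definition convex_cone (R : realType) (m : nat) (ns : 'I_m -> nat)
  (Cs : (Omega R ns -> R) -> Prop) : Prop :=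
  forall f g (a b : R), Cs f -> Cs g -> 0 <= a -> 0 <= b ->
    Cs (fun x => a * f x + b * g x).

(* closedness in the finite-dimensional space L_R (sequential, pointwise
   convergence; equivalent to norm-closedness on L_R) *)
Definition closed_in_LR (R : realType) (m : nat) (ns : 'I_m -> nat)
  (Cs : (Omega R ns -> R) -> Prop) : Prop :=
  forall (u : nat -> Omega R ns -> R) (f : Omega R ns -> R),
    (forall k, Cs (u k)) -> LR f ->
    (forall x (e : R), 0 < e -> exists N : nat, forall k : nat, (N <= k)%N ->
        `|u k x - f x| < e) ->
    Cs f.

Definition P_coherent (R : realType) (m : nat) (ns : 'I_m -> nat)
  (Cs : (Omega R ns -> R) -> Prop) : Prop :=
  [/\ (forall f, Cs f -> LR f),
      convex_cone Cs,
      closed_in_LR Cs,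
      (forall G, psd G -> Cs (gG G)) &
      (forall G, negdef G -> ~ Cs (gG G))].

Definition linear_on_LR (R : realType) (m : nat) (ns : 'I_m -> nat)
  (L : (Omega R ns -> R) -> R) : Prop :=
  forall f g (a b : R), LR f -> LR g ->
    L (fun x => a * f x + b * g x) = a * L f + b * L g.

(* Z = L((x)x (x)x^dagger) entrywise, L extended complex-linearly:
   L(h) = L(Re h) + i L(Im h) *)
Definition Zmat (R : realType) (m : nat) (ns : 'I_m -> nat)
  (L : (Omega R ns -> R) -> R) : 'M[R[i]]_(tdim ns) :=
  \matrix_(a, b)
    (Complex (L (fun x => complex.Re (psi x a 0 * (psi x b 0)^*)))
             (L (fun x => complex.Im (psi x a 0 * (psi x b 0)^*)))).

Definition in_dual (R : realType) (m : nat) (ns : 'I_m -> nat)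
  (Cs : (Omega R ns -> R) -> Prop) (L : (Omega R ns -> R) -> R) : Prop :=
  forall g, Cs g -> 0 <= L g.

(* Main.v *)
Require Import Defs.
From HB Require Import structures.
From mathcomp Require Import all_boot all_order all_algebra.
From mathcomp Require Import boolp reals.
From mathcomp Require Import complex.
From mathcomp Require Import ring lra.
Import Order.TTheory GRing.Theory Num.Theory.
Local Open Scope ring_scope.
Section S.
Local Open Scope complex_scope.
Variables (R : realType) (m : nat) (ns : 'I_m -> nat).
Local Notation n := (tdim ns).
Local Notation M := ('M[R[i]]_n).
Local Notation Om := (Omega R ns).

Lemma conjE (a b : R) : Num.conj (Complex a b) = Complex a (-b).
Proof. reflexivity. Qed.
Lemma conjR (a : R) : Num.conj (a%:C) = a%:C.
Proof. by rewrite [LHS]conjE oppr0. Qed.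
Lemma ReD (z w : R[i]) : complex.Re (z + w) = complex.Re z + complex.Re w.
Proof. by case: z; case: w. Qed.
Lemma ImD (z w : R[i]) : complex.Im (z + w) = complex.Im z + complex.Im w.
Proof. by case: z; case: w. Qed.

Lemma adjM p q r (A : 'M[R[i]]_(p,q)) (B : 'M_(q,r)) : adj (A *m B) = adj B *m adj A.
Proof.
apply/matrixP=> i j; rewrite !mxE rmorph_sum; apply: eq_bigr => k _.
by rewrite !mxE rmorphM mulrC.
Qed.
Lemma adjK p q (A : 'M[R[i]]_(p,q)) : adj (adj A) = A.
Proof. by apply/matrixP=> i j; rewrite !mxE conjCK. Qed.
Lemma adjD p q (A B : 'M[R[i]]_(p,q)) : adj (A + B) = adj A + adj B.
Proof. by apply/matrixP=> i j; rewrite !mxE rmorphD. Qed.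
Lemma adjZ p q c (A : 'M[R[i]]_(p,q)) : adj (c *: A) = Num.conj c *: adj A.
Proof. by apply/matrixP=> i j; rewrite !mxE rmorphM. Qed.
Lemma adj_delta p q (a : 'I_p) (b : 'I_q) : adj (delta_mx a b : 'M[R[i]]_(p,q)) = delta_mx b a.
Proof. by apply/matrixP=> i j; rewrite !mxE rmorph_nat andbC. Qed.

Definition qf (G : M) (x : Om) : R[i] := (adj (psi x) *m G *m psi x) 0 0.
Lemma qD G H x : qf (G + H) x = qf G x + qf H x.
Proof. by rewrite /qf mulmxDr mulmxDl mxE. Qed.
Lemma qZ c G x : qf (c *: G) x = c * qf G x.
Proof. by rewrite /qf -scalemxAr -scalemxAl mxE. Qed.
Lemma q_adj G x : qf (adj G) x = Num.conj (qf G x).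
Proof.
rewrite /qf.
have -> : Num.conj ((adj (psi x) *m G *m psi x) 0 0) = adj (adj (psi x) *m G *m psi x) 0 0.
  by rewrite !mxE.
by rewrite !adjM adjK mulmxA.
Qed.
Lemma q_delta a b x : qf (delta_mx a b) x = Num.conj (psi x a 0) * psi x b 0.
Proof.
rewrite /qf !mxE (bigD1 b) //= big1 ?addr0.
  rewrite !mxE (bigD1 a) //= big1 ?addr0.
    by rewrite !mxE !eqxx mulr1.
  by move=> k /negbTE nk; rewrite !mxE nk mulr0.
move=> k /negbTE nk; rewrite !mxE big1 ?mul0r // => l _.
by rewrite !mxE [k == b]nk andbF mulr0.
Qed.
Definition fR (G : M) : Om -> R := fun x => complex.Re (qf G x).
Definition fI (G : M) : Om -> R := fun x => complex.Im (qf G x).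

Lemma LR_lin (f g : Om -> R) a b : LR f -> LR g -> LR (fun x => a * f x + b * g x).
Proof.
move=> [F [hF ->]] [G [hG ->]]; exists (a%:C *: F + b%:C *: G); split.
  by rewrite /herm_mx adjD !adjZ hF hG !conjR.
apply: funext => x; rewrite /gG -!/(qf _ x) qD !qZ ReD.
by case: (qf F x) => ? ?; case: (qf G x) => ? ? /=; ring.
Qed.

Lemma LR_fR G : LR (fR G).
Proof.
exists ((1/2)%:C *: (G + adj G)); split.
  by rewrite /herm_mx adjZ adjD adjK conjR addrC.
apply: funext => x; rewrite /gG /fR -!/(qf _ x) qZ qD q_adj.
case: (qf G x) => a b /=; lra.
Qed.

Lemma fI_fR G : fI G = fR ((- 'i) *: G).
Proof. by apply: funext => x; rewrite /fR /fI qZ; case: (qf G x) => a b /=; ring. Qed.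

Lemma LR_fI G : LR (fI G).
Proof. rewrite fI_fR; exact: LR_fR. Qed.

Variable L : (Om -> R) -> R.
Hypothesis hlin : linear_on_LR L.

Lemma LD (f g : Om -> R) : LR f -> LR g -> L (fun x => f x + g x) = L f + L g.
Proof.
move=> hf hg; have := hlin _ _ 1 1 hf hg; rewrite !mul1r => <-.
by congr L; apply: funext => x; rewrite !mul1r.
Qed.
Lemma LZ a (f : Om -> R) : LR f -> L (fun x => a * f x) = a * L f.
Proof.
move=> hf; have := hlin _ _ a 0 hf hf; rewrite mul0r addr0 => <-.
by congr L; apply: funext => x; rewrite mul0r addr0.
Qed.
Lemma L0 : L (fun _ => 0) = 0.
Proof.
transitivity (L (fun x => 0 * fR 0 x)).
  by congr L; apply: funext => x; rewrite mul0r.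
by rewrite LZ ?mul0r //; apply: LR_fR.
Qed.
Lemma LN (f : Om -> R) : LR f -> L (fun x => - f x) = - L f.
Proof.
move=> hf; rewrite -mulN1r -LZ //.
by congr L; apply: funext => x; rewrite mulN1r.
Qed.

Definition Lc (G : M) : R[i] := Complex (L (fR G)) (L (fI G)).

Lemma fR_D G H : fR (G + H) = fun x => fR G x + fR H x.
Proof. by apply: funext => x; rewrite /fR qD ReD. Qed.
Lemma fI_D G H : fI (G + H) = fun x => fI G x + fI H x.
Proof. by apply: funext => x; rewrite /fI qD ImD. Qed.
Lemma fR_Z c G : fR (c *: G) = fun x => complex.Re c * fR G x + (- complex.Im c) * fI G x.
Proof. by apply: funext => x; rewrite /fR /fI qZ; case: c => ? ?; case: (qf G x) => ? ? /=; ring. Qed.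
Lemma fI_Z c G : fI (c *: G) = fun x => complex.Im c * fR G x + complex.Re c * fI G x.
Proof. by apply: funext => x; rewrite /fR /fI qZ; case: c => ? ?; case: (qf G x) => ? ? /=; ring. Qed.

Lemma LcD G H : Lc (G + H) = Lc G + Lc H.
Proof. by rewrite /Lc fR_D fI_D !LD //; (apply: LR_fR || apply: LR_fI). Qed.
Lemma LcZ c G : Lc (c *: G) = c * Lc G.
Proof.
rewrite /Lc fR_Z fI_Z !hlin //; try (apply: LR_fR || apply: LR_fI).
by case: c => a b /=; congr Complex; ring.
Qed.
Lemma Lc0 : Lc 0 = 0.
Proof. by rewrite -(scale0r (0 : M)) LcZ mul0r. Qed.

Lemma Lc_sum G : Lc G = \sum_a \sum_b G a b * Lc (delta_mx a b).
Proof.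
rewrite {1}(matrix_sum_delta G) (big_morph Lc LcD Lc0); apply: eq_bigr => a _.
rewrite (big_morph Lc LcD Lc0); apply: eq_bigr => b _; by rewrite LcZ.
Qed.

Lemma Z_entry a b : Zmat L b a = Lc (delta_mx a b).
Proof.
rewrite mxE /Lc /fR /fI; congr Complex; congr L; apply: funext => x;
by rewrite q_delta mulrC.
Qed.

Lemma tr_eq G : \tr (G *m Zmat L) = Lc G.
Proof.
rewrite Lc_sum /mxtrace; apply: eq_bigr => a _; rewrite mxE; apply: eq_bigr => b _.
by rewrite Z_entry.
Qed.

Lemma Lc_herm G : herm_mx G -> Lc G = (L (gG G))%:C.
Proof.
move=> hG; rewrite /Lc.
have -> : fI G = fun _ => 0.
  apply: funext => x; rewrite /fI.
  have := q_adj G x; rewrite hG; case: (qf G x) => a b /= [] ; lra.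
by rewrite L0.
Qed.

Lemma Lc_adj G : Lc (adj G) = Num.conj (Lc G).
Proof.
rewrite /Lc.
have -> : fR (adj G) = fR G.
  by apply: funext => x; rewrite /fR q_adj; case: (qf G x).
have -> : fI (adj G) = fun x => - fI G x.
  by apply: funext => x; rewrite /fI q_adj; case: (qf G x).
by rewrite LN //; apply: LR_fI.
Qed.

Lemma Z_herm : herm_mx (Zmat L).
Proof.
apply/matrixP => i j.
have -> : adj (Zmat L) i j = Num.conj (Zmat L j i) by rewrite !mxE.
rewrite !Z_entry -Lc_adj.
by rewrite adj_delta.
Qed.

Lemma quad_eq (v : 'cV[R[i]]_n) :
  (adj v *m Zmat L *m v) 0 0 = Lc (v *m adj v).
Proof.
by rewrite -trace_mx11 mxtrace_mulC mulmxA tr_eq.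
Qed.

Lemma psd_vv (v : 'cV[R[i]]_n) : psd (v *m adj v).
Proof.
split; first by rewrite /herm_mx adjM adjK.
move=> w.
have -> : adj w *m (v *m adj v) *m w = (adj w *m v) *m (adj v *m w) by rewrite !mulmxA.
rewrite mxE big_ord1.
have -> : (adj v *m w) 0 0 = Num.conj ((adj w *m v) 0 0).
  by rewrite -[adj v *m w]adjK adjM adjK !mxE.
case: ((adj w *m v) 0 0) => a b; rewrite lecE /=.
apply/andP; split; first by apply/eqP; ring.
rewrite mulrN opprK; apply: addr_ge0; exact: sqr_ge0.
Qed.

End S.

Theorem proposition10 (R : realType) (m : nat) (ns : 'I_m -> nat)
  (ns_pos : forall j, (0 < ns j)%N)
  (Cs : (Omega R ns -> R) -> Prop) (L : (Omega R ns -> R) -> R) :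
  P_coherent Cs -> linear_on_LR L ->
  (in_dual Cs L <->
   (psd (Zmat L) /\
    forall G : 'M[R[i]]_(tdim ns), herm_mx G -> Cs (gG G) ->
      0 <= \tr (G *m Zmat L))).
Proof.
move=> [CsLR _ _ Cpsd _] hlin; split.
- move=> hd; split.
  + split; first exact: Z_herm.
    move=> v; rewrite quad_eq // Lc_herm //; last by case: (@psd_vv R m ns v).
    rewrite ler0c; apply: hd; apply: Cpsd; exact: psd_vv.
  + move=> G hG CG; rewrite tr_eq // Lc_herm // ler0c; exact: hd.
- move=> [_ h] g Cg; have [G [hG E]] := CsLR g Cg; subst g.
  have := h G hG Cg; by rewrite tr_eq // Lc_herm // ler0c.
Qed.
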